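(* Let $A$ be a calibrated $R$-superalgebra with basis $B^A=B^A_{\mathfrak a}\sqcup B^A_{\mathfrak c}\sqcup B^A_{\bar1}$, and let $e\in\mathfrak a$ be an idempotent such that $be=b$ or $be=0$ for every $b\in B^A$. Regard $Ae$ as a calibrated $A$-supermodule with $(Ae)_{\mathfrak a}=\mathfrak ae$ and $(Ae)_{\mathfrak c}=\mathfrak ce$. Then $\tilde\Gamma^d(Ae)\cong(\tilde\Gamma^dA)\,\eta^{e^d}$ as $\tilde\Gamma^dA$-supermodules, where $\eta^{e^d}=e^{\otimes d}$.
   Context: Let $R$ be a principal ideal domain of characteristic $0$. A calibrated $R$-supermodule is a free $R$-supermodule $V=V_{\bar0}\oplus V_{\bar1}$ of finite rank with a decomposition $V_{\bar0}=V_{\mathfrak a}\oplus V_{\mathfrak c}$ into free $R$-submodules, with chosen bases $B_{\mathfrak a},B_{\mathfrak c},B_{\bar1}$ and a total order on their union $B$. $\mathfrak S_d$ acts on $V^{\otimes d}$ by $(v_1\otimes\cdots\otimes v_d)^\sigma=(-1)^{\langle\sigma;\mathbf v\rangle}v_{\sigma1}\otimes\cdots\otimes v_{\sigma d}$, with $\langle\sigma;\mathbf v\rangle$ the number of $k<l$ with $\sigma^{-1}k>\sigma^{-1}l$ and $v_k,v_l$ odd; $\Gamma^dV$ = invariants. For $\mathbf b\in B^d$: $\langle\mathbf b\rangle$ = number of $k<l$ with $b_k,b_l\in B_{\bar1}$ and $b_k>b_l$; $[\mathbf b]^!_{\mathfrak c}=\prod_{b\in B_{\mathfrak c}}\#\{k:b_k=b\}!$;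 $\mathrm{Seq}(B,d)$ = tuples in which only even basis elements may repeat; $x_{\mathbf b}=\sum(-1)^{\langle\mathbf b\rangle+\langle\mathbf b'\rangle}b'_1\otimes\cdots\otimes b'_d$ over distinct place-permutations $\mathbf b'$ of $\mathbf b$; $y_{\mathbf b}=[\mathbf b]^!_{\mathfrak c}x_{\mathbf b}$; $\tilde\Gamma^dV=\mathrm{span}_R\{y_{\mathbf b}\}$. A calibrated $R$-superalgebra is an $R$-superalgebra $A$, free of finite rank, with $A_{\bar0}=\mathfrak a\oplus\mathfrak c$ (free $R$-submodules), $\mathfrak a$ a unital subalgebra; for $\mathbf a\in\mathrm{Seq}(B^A,d)$ write $\eta^{\mathbf a}=y_{\mathbf a}\in\tilde\Gamma^dA$. $\tilde\Gamma^dA$ is a unital subsuperalgebra of the superalgebra $A^{\otimes d}$ (product $(a_1\otimes\cdots)(b_1\otimes\cdots)=(-1)^{\langle\mathbf a,\mathbf b\rangle}a_1b_1\otimes\cdots$, $\langle\mathbf a,\mathbf b\rangle$ = number of $k>l$ with $a_k,b_l$ odd). A calibrated $A$-supermodule is an $A$-supermodule which is calibrated with $\mathfrak aV_{\mathfrak a}\subseteq V_{\mathfrak a}$; for such $V$, $\tilde\Gamma^dV$ is a $\tilde\Gamma^dA$-supermodule via the natural action of $A^{\otimes d}$ on $V^{\otimes d}$ (with the sign $(-1)^{\langle\mathbf a,\mathbf v\rangle}$). *)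

(* Defs.v *)
From HB Require Import structures.
From mathcomp Require Import all_boot all_order all_algebra.
Set Implicit Arguments. Unset Strict Implicit. Unset Printing Implicit Defensive.
Import Order.TTheory GRing.Theory Num.Theory.
Local Open Scope ring_scope.

Definition is_ideal (R : comNzRingType) (S : R -> Prop) :=
  [/\ S 0, (forall x y, S x -> S y -> S (x + y)) & (forall r x, S x -> S (r * x))].
Definition is_PID (R : idomainType) :=
  forall S : R -> Prop, is_ideal S -> exists g : R, forall x, S x <-> exists r, x = r * g.
Definition char0 (R : nzRingType) := forall n : nat, (0 < n)%N -> n%:R != 0 :> R.

(* Every basis element is of kind 𝔞 (even), 𝔠 (even) or odd. *)
Inductive bkind := Ka | Kc | Kodd.
Definition bkind_eqb (x y : bkind) :=
  match x, y with Ka, Ka | Kc, Kc | Kodd, Kodd => true | _, _ => false end.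
Lemma bkind_eqP : Equality.axiom bkind_eqb.
Proof. by case; case; constructor. Qed.
HB.instance Definition _ := hasDecEq.Build bkind bkind_eqP.

Definition strict_total (I : eqType) (lt : rel I) :=
  [/\ irreflexive lt, transitive lt & forall x y, x != y -> lt x y || lt y x].

(* A free R-module of finite rank with basis indexed by I is modelled by
   coefficient vectors {ffun I -> R}; delta b is the basis vector b. *)
Definition delta (R : nzRingType) (I : finType) (b : I) : {ffun I -> R} :=
  [ffun i => (i == b)%:R].

Section Alg.
Variables (R : comNzRingType) (I : finType).
Variable (kind : I -> bkind).
Variable (mu : I -> I -> {ffun I -> R}). (* mu i j = product of basis elements i, j *)
Definition oddb (i : I) : bool := kind i == Kodd.
Definition smul (x y : {ffun I -> R}) : {ffun I -> R} :=
  [ffun k => \sum_i \sum_j x i * y j * mu i j k].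
(* A calibrated R-superalgebra: associative unital superalgebra,
   A_0 = 𝔞 ⊕ 𝔠, A_1 spanned by odd basis vectors, 𝔞 a unital subalgebra. *)
Definition calibrated_superalg (one : {ffun I -> R}) :=
  [/\ forall x y z, smul (smul x y) z = smul x (smul y z),
      forall x, smul one x = x /\ smul x one = x,
      forall i j k, mu i j k != 0 -> oddb k = oddb i (+) oddb j,
      forall k, one k != 0 -> kind k = Ka &
      forall i j k, kind i = Ka -> kind j = Ka -> mu i j k != 0 -> kind k = Ka].
Definition in_a (x : {ffun I -> R}) := forall k, x k != 0 -> kind k = Ka.
End Alg.

(* V^{(x)d} for V with basis J has basis the d-tuples {ffun 'I_d -> J}. *)
Section Tensor.
Variables (R : comNzRingType) (d : nat).

Section OneBasis.
Variables (J : finType) (lt : rel J) (kind : J -> bkind).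
Let oddJ (j : J) := kind j == Kodd.

Definition inv_odd (b : {ffun 'I_d -> J}) : nat :=
  #|[set kl : 'I_d * 'I_d | [&& (kl.1 < kl.2)%N, oddJ (b kl.1), oddJ (b kl.2)
                               & lt (b kl.2) (b kl.1)]]|.
Definition is_seq (b : {ffun 'I_d -> J}) : bool :=
  [forall k, forall l, ((k != l) && (b k == b l)) ==> ~~ oddJ (b k)].
(* x_b = sum over distinct place permutations b' of b of (-1)^(<b>+<b'>) b' *)
Definition xb (b : {ffun 'I_d -> J}) : {ffun {ffun 'I_d -> J} -> R} :=
  [ffun t : {ffun 'I_d -> J} => if perm_eq (codom b) (codom t) then (-1) ^+ (inv_odd b + inv_odd t) else 0].
Definition fact_c (b : {ffun 'I_d -> J}) : R :=
  \prod_(x : J | kind x == Kc) ((count_mem x (codom b))`!)%:R.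
Definition yb (b : {ffun 'I_d -> J}) : {ffun {ffun 'I_d -> J} -> R} :=
  [ffun t => fact_c b * xb b t].
Definition GammaT (t : {ffun {ffun 'I_d -> J} -> R}) : Prop :=
  exists c : {ffun 'I_d -> J} -> R,
    forall t', t t' = \sum_(b | is_seq b) c b * yb b t'.
Definition tpar (t : {ffun 'I_d -> J}) : bool := odd #|[set k | oddJ (t k)]|.
Definition homog (p : bool) (x : {ffun {ffun 'I_d -> J} -> R}) :=
  forall t, x t != 0 -> tpar t = p.
End OneBasis.

(* action of A^{(x)d} on V^{(x)d}, given action constants act i j = b_i . v_j *)
Section Action.
Variables (I J : finType) (kindI : I -> bkind) (kindJ : J -> bkind).
Variable (act : I -> J -> {ffun J -> R}).
Definition sgnAV (a : {ffun 'I_d -> I}) (w : {ffun 'I_d -> J}) : nat :=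
  #|[set kl : 'I_d * 'I_d | [&& (kl.2 < kl.1)%N, kindI (a kl.1) == Kodd
                                & kindJ (w kl.2) == Kodd]]|.
Definition actT (X : {ffun {ffun 'I_d -> I} -> R}) (v : {ffun {ffun 'I_d -> J} -> R})
  : {ffun {ffun 'I_d -> J} -> R} :=
  [ffun t : {ffun 'I_d -> J} => \sum_a \sum_w X a * v w * (-1) ^+ sgnAV a w * \prod_k act (a k) (w k) (t k)].
End Action.

Definition tpow (I : finType) (e : {ffun I -> R}) : {ffun {ffun 'I_d -> I} -> R} :=
  [ffun t : {ffun 'I_d -> I} => \prod_k e (t k)].
End Tensor.

Section Ae.
Variables (R : comNzRingType) (I : finType) (mu : I -> I -> {ffun I -> R}) (e : {ffun I -> R}).
Definition AeB := {b : I | smul mu (delta R b) e == delta R b}.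
Definition AeLt (lt : rel I) : rel AeB := fun x y => lt (val x) (val y).
Definition AeKind (kind : I -> bkind) : AeB -> bkind := fun x => kind (val x).
(* a_i . b_j = a_i b_j (which lies in Ae), written in the basis of Ae *)
Definition AeAct : I -> AeB -> {ffun AeB -> R} :=
  fun i j => [ffun j' : AeB => mu i (val j) (val j')].
End Ae.
Arguments AeB {R I} mu e.
Arguments AeLt {R I} mu e lt _ _.
Arguments AeKind {R I} mu e kind _.
Arguments AeAct {R I} mu e i j.

(* P, Q: submodules of V^{(x)d}, W^{(x)d}; actP, actQ: the actions of A^{(x)d};
   G: the acting algebra tilde Gamma^d A. *)
Definition superiso (R : comNzRingType) (d : nat) (I U W : finType)
  (kindU : U -> bkind) (kindW : W -> bkind)
  (G : {ffun {ffun 'I_d -> I} -> R} -> Prop)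
  (P : {ffun {ffun 'I_d -> U} -> R} -> Prop) (Q : {ffun {ffun 'I_d -> W} -> R} -> Prop)
  (actP : {ffun {ffun 'I_d -> I} -> R} -> {ffun {ffun 'I_d -> U} -> R} -> {ffun {ffun 'I_d -> U} -> R})
  (actQ : {ffun {ffun 'I_d -> I} -> R} -> {ffun {ffun 'I_d -> W} -> R} -> {ffun {ffun 'I_d -> W} -> R})
  :=
  exists f : {ffun {ffun 'I_d -> U} -> R} -> {ffun {ffun 'I_d -> W} -> R},
  [/\ (forall x y, P x -> P y -> f (x + y) = f x + f y),
      (forall (r : R) x, P x -> f [ffun t => r * x t] = [ffun t => r * f x t]),
      (forall x, P x -> Q (f x)),
      (forall x y, P x -> P y -> f x = f y -> x = y) &
   [/\ (forall y, Q y -> exists2 x, P x & f x = y),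
      (forall p x, P x -> homog kindU p x -> homog kindW p (f x)) &
      (forall X x, G X -> P x -> f (actP X x) = actQ X (f x))]].

(* Main.v *)
Require Import Defs.
From HB Require Import structures.
From mathcomp Require Import all_boot all_order all_algebra.
Set Implicit Arguments. Unset Strict Implicit. Unset Printing Implicit Defensive.
Import GRing.Theory.
Local Open Scope ring_scope.

Lemma big_inj (T : Type) (idx : T) (op : Monoid.com_law idx) (A B : finType)
  (g : A -> B) (ginj : injective g) (F : B -> T) :
  (forall b, (forall a, g a != b) -> F b = idx) ->
  \big[op/idx]_b F b = \big[op/idx]_a F (g a).
Proof.
move=> H0.
rewrite (partition_big g predT) //=; apply: eq_bigr => b _.
case: (pickP (fun a => g a == b)) => [a /eqP <- | Hn].
  rewrite (big_pred1 a) // => a' /=; exact: inj_eq.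
rewrite big_pred0 ?H0 //.
by move=> a; rewrite Hn.
Qed.

Arguments big_inj {T idx op A B g} ginj {F}.
Section S.
Variables (R : comNzRingType) (I : finType) (mu : I -> I -> {ffun I -> R}) (e : {ffun I -> R}).
Hypothesis assoc : forall x y z, smul mu (smul mu x y) z = smul mu x (smul mu y z).
Hypothesis Hb : forall b, smul mu (delta R b) e = delta R b \/ smul mu (delta R b) e = 0.
Variable d : nat.
Local Notation J := (AeB mu e).
Definition Sb (i : I) : bool := smul mu (delta R i) e == delta R i.
Definition tl (t : {ffun 'I_d -> J}) : {ffun 'I_d -> I} := [ffun k => val (t k)].

Lemma sum_delta (F : I -> R) i : \sum_j (delta R i j * F j) = F i.
Proof.
rewrite (bigD1 i) //= ffunE eqxx mul1r big1 ?addr0 // => j /negbTE.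
by rewrite ffunE => ->; rewrite mul0r.
Qed.

Lemma smul_deltal i y k : smul mu (delta R i) y k = \sum_j y j * mu i j k.
Proof.
rewrite ffunE.
transitivity (\sum_i' delta R i i' * (\sum_j y j * mu i' j k)); last exact: sum_delta.
apply: eq_bigr => i' _; rewrite mulr_sumr; apply: eq_bigr => j _; by rewrite !mulrA.
Qed.

Lemma smul_decomp Z y k : smul mu Z y k = \sum_i Z i * smul mu (delta R i) y k.
Proof.
rewrite ffunE; apply: eq_bigr => i _; rewrite smul_deltal mulr_sumr.
apply: eq_bigr => j _; by rewrite !mulrA.
Qed.

Lemma smul_delta_e i k : smul mu (delta R i) e k = if Sb i then (k == i)%:R else 0.
Proof.
rewrite /Sb; case: (Hb i) => E; rewrite E ?eqxx ?ffunE //.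
have -> : (0 == delta R i) = false.
  apply/eqP => /ffunP/(_ i); rewrite !ffunE eqxx => /eqP; by rewrite eq_sym oner_eq0.
by [].
Qed.

Lemma closure i (j : J) k : ~~ Sb k -> mu i (val j) k = 0.
Proof.
move=> nS.
have Hj : smul mu (delta R (val j)) e = delta R (val j) := eqP (valP j).
have -> : mu i (val j) k = smul mu (delta R i) (delta R (val j)) k.
  by rewrite smul_deltal sum_delta.
rewrite -Hj -assoc smul_decomp big1 // => i' _.
rewrite smul_delta_e; case: ifP => Si'; last by rewrite mulr0.
case: eqP => [Eki|]; last by rewrite mulr0.
by move: Si'; rewrite -Eki (negbTE nS).
Qed.

Lemma tl_inj : injective tl.
Proof.
move=> a b /ffunP H; apply/ffunP => k; move: (H k); rewrite !ffunE; exact: val_inj.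
Qed.

Lemma tl_S t' k : Sb (tl t' k).
Proof. rewrite ffunE; exact: (valP (t' k)). Qed.

Lemma tl_ex (t : {ffun 'I_d -> I}) : (forall k, Sb (t k)) -> exists t', tl t' = t.
Proof.
move=> H.
have : forall k, exists j : J, val j = t k by move=> k; exists (exist _ (t k) (H k)).
case/fin_all_exists => g Hg; exists [ffun k => g k]; apply/ffunP => k.
by rewrite !ffunE Hg.
Qed.

Lemma tl_out (t : {ffun 'I_d -> I}) : ~~ [forall k, Sb (t k)] -> forall t', tl t' != t.
Proof.
move=> /forallPn [k Hk] t'; apply/eqP => E; move: Hk; by rewrite -E tl_S.
Qed.

Lemma tl_out' (t : {ffun 'I_d -> I}) : (forall t', tl t' != t) -> ~~ [forall k, Sb (t k)].
Proof.
move=> H; apply/negP => /forallP /tl_ex [t' E]; by move: (H t'); rewrite E eqxx.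
Qed.

Definition Fm (x : {ffun {ffun 'I_d -> J} -> R}) : {ffun {ffun 'I_d -> I} -> R} :=
  [ffun t => \sum_(t' | tl t' == t) x t'].

Lemma Fm_tl x t' : Fm x (tl t') = x t'.
Proof. rewrite ffunE (big_pred1 t') // => s /=. apply: (inj_eq (@tl_inj)). Qed.

Lemma Fm_out x (t : {ffun 'I_d -> I}) : ~~ [forall k, Sb (t k)] -> Fm x t = 0.
Proof.
move=> H; rewrite ffunE big1 // => t' E; by move: (tl_out H t'); rewrite E.
Qed.

Lemma codom_tl (b : {ffun 'I_d -> J}) : codom (tl b) = map val (codom b).
Proof. rewrite !codomE -!map_comp; apply: eq_map => k /=; by rewrite ffunE. Qed.

Variables (lt : rel I) (kind : I -> bkind).
Hypothesis He_a : in_a kind e.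

Lemma inv_odd_tl b : inv_odd (AeLt mu e lt) (AeKind mu e kind) b = inv_odd lt kind (tl b).
Proof. rewrite /inv_odd; apply: eq_card => kl; by rewrite !inE !ffunE. Qed.

Lemma is_seq_tl b : is_seq (AeKind mu e kind) b = is_seq kind (tl b).
Proof.
rewrite /is_seq; apply: eq_forallb => k; apply: eq_forallb => l.
by rewrite !ffunE val_eqE.
Qed.

Lemma tpar_tl t : tpar (AeKind mu e kind) t = tpar kind (tl t).
Proof. rewrite /tpar; congr (odd _); apply: eq_card => k; by rewrite !inE ffunE. Qed.

Lemma sgnAV_tl (a : {ffun 'I_d -> I}) w :
  sgnAV kind (AeKind mu e kind) a w = sgnAV kind kind a (tl w).
Proof. rewrite /sgnAV; apply: eq_card => kl; by rewrite !inE ffunE. Qed.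

Lemma perm_tl (b t : {ffun 'I_d -> J}) :
  perm_eq (codom b) (codom t) = perm_eq (codom (tl b)) (codom (tl t)).
Proof.
rewrite !codom_tl; apply/idP/idP => [/(perm_map val)|/(perm_map_inj val_inj)] //.
Qed.

Lemma fact_c_tl b : fact_c R (AeKind mu e kind) b = fact_c R kind (tl b).
Proof.
rewrite /fact_c [RHS]big_mkcond [RHS](@big_inj _ _ _ J I val val_inj) ?big_mkcond; last first.
  move=> x Hx; rewrite codom_tl (count_memPn _) ?fact0 //; first by case: ifP.
  apply/mapP => [[j _ E]]; move: (Hx j); by rewrite E eqxx.
apply: eq_bigr => j _; rewrite codom_tl /AeKind [in RHS]count_map.
have -> : count (preim val (pred1 (val j))) (codom b) = count_mem j (codom b).
  apply: eq_count => y /=; by rewrite val_eqE.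
by [].
Qed.

Lemma yb_tl b t' : yb R (AeLt mu e lt) (AeKind mu e kind) b t' = yb R lt kind (tl b) (tl t').
Proof. by rewrite !ffunE fact_c_tl -perm_tl !inv_odd_tl. Qed.

Lemma yb_out b (t : {ffun 'I_d -> I}) : ~~ [forall k, Sb (t k)] -> yb R lt kind (tl b) t = 0.
Proof.
move=> /forallPn [k Hk]; rewrite !ffunE; case: ifP => [P|]; last by rewrite mulr0.
have : t k \in codom (tl b) by rewrite (perm_mem P) codom_f.
case/codomP => k' E; by move: Hk; rewrite E tl_S.
Qed.

Lemma yb_out2 (b'' : {ffun 'I_d -> I}) t' : (forall b, tl b != b'') -> yb R lt kind b'' (tl t') = 0.
Proof.
move=> H; rewrite !ffunE; case: ifP => [P|]; last by rewrite mulr0.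
have : [forall k, Sb (b'' k)].
  apply/forallP => k; have : b'' k \in codom (tl t') by rewrite -(perm_mem P) codom_f.
  case/codomP => k' ->; exact: tl_S.
move=> /forallP /tl_ex [b Eb]; by move: (H b); rewrite Eb eqxx.
Qed.

Lemma Gamma_Fm x : GammaT (AeLt mu e lt) (AeKind mu e kind) x -> GammaT lt kind (Fm x).
Proof.
case=> c Hc; exists (fun b'' => \sum_(b | tl b == b'') c b) => t.
rewrite big_mkcond (big_inj tl_inj); last first.
  move=> b'' Hn; rewrite big_pred0 => [|b]; last exact/negbTE.
  by rewrite mul0r; case: ifP.
have E : forall b, (\sum_(b' | tl b' == tl b) c b') = c b.
  by move=> b; rewrite (big_pred1 b) // => b' /=; exact: (inj_eq (@tl_inj)).
under eq_bigr => b _ do rewrite E -is_seq_tl.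
rewrite -big_mkcond /=.
case: (boolP [forall k, Sb (t k)]) => [/forallP/tl_ex [t' <-] | Hn].
  rewrite Fm_tl Hc; apply: eq_bigr => b _; by rewrite yb_tl.
rewrite Fm_out // big1 // => b _; by rewrite yb_out ?mulr0.
Qed.

Lemma act_tpow X (t : {ffun 'I_d -> I}) :
  actT kind kind mu X (tpow d e) t = X t * \prod_k (Sb (t k))%:R.
Proof.
rewrite ffunE.
have step : forall a, \sum_w X a * tpow d e w * (-1) ^+ sgnAV kind kind a w
     * \prod_k mu (a k) (w k) (t k) = X a * \prod_k smul mu (delta R (a k)) e (t k).
  move=> a.
  transitivity (X a * \sum_(w : {ffun 'I_d -> I}) \prod_k (e (w k) * mu (a k) (w k) (t k))).
    rewrite mulr_sumr; apply: eq_bigr => w _; rewrite /tpow ffunE.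
    case: (boolP [forall k, e (w k) != 0]) => [/forallP He | /forallPn [k /negPn /eqP Hk]].
      have -> : sgnAV kind kind a w = 0%N.
        apply/eqP; rewrite cards_eq0; apply/eqP/setP => kl; rewrite !inE.
        by rewrite (He_a (He kl.2)) /= !andbF.
      by rewrite expr0 mulr1 big_split /= mulrA.
    rewrite [in LHS](bigD1 k) //= [in RHS](bigD1 k) //= Hk.
    by rewrite !(mul0r, mulr0).
  congr (_ * _); rewrite -(bigA_distr_bigA (fun k j => e j * mu (a k) j (t k))) /=.
  apply: eq_bigr => k _; by rewrite smul_deltal.
rewrite (eq_bigr _ (fun a _ => step a)).
rewrite (bigD1 t) //= [X in _ + X]big1 ?addr0.
  congr (_ * _); apply: eq_bigr => k _; rewrite smul_delta_e eqxx; by case: (Sb _).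
move=> a /eqP Hne.
case/boolP: [exists k, a k != t k] => [/existsP [k Hk] | /existsPn H].
  rewrite (bigD1 k) //= smul_delta_e; case: ifP => _; last by rewrite !(mul0r, mulr0).
  by rewrite eq_sym (negbTE Hk) !(mul0r, mulr0).
exfalso; apply: Hne; apply/ffunP => k; exact/eqP/negPn/(H k).
Qed.

Lemma Fm_restr x t : Fm x t = Fm x t * \prod_k (Sb (t k))%:R.
Proof.
case: (boolP [forall k, Sb (t k)]) => [/forallP/tl_ex [t' <-] | Hn].
  rewrite big1 ?mulr1 // => k _; by rewrite tl_S.
by rewrite Fm_out // mul0r.
Qed.

Lemma prod_out (t : {ffun 'I_d -> I}) : ~~[forall k, Sb (t k)] -> \prod_k (Sb (t k))%:R = 0 :> R.
Proof. move=>/forallPn [k Hk]; by rewrite (bigD1 k) //= (negbTE Hk) mul0r. Qed.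

Lemma Fm_act X x : Fm (actT kind (AeKind mu e kind) (AeAct mu e) X x) = actT kind kind mu X (Fm x).
Proof.
apply/ffunP => t.
have E : forall a, \sum_w X a * Fm x w * (-1) ^+ sgnAV kind kind a w * \prod_k mu (a k) (w k) (t k)
   = \sum_w' X a * x w' * (-1) ^+ sgnAV kind kind a (tl w') * \prod_k mu (a k) (val (w' k)) (t k).
  move=> a; rewrite [LHS](big_inj tl_inj).
    apply: eq_bigr => w' _; rewrite Fm_tl; congr (_ * _); apply: eq_bigr => k _; by rewrite ffunE.
  move=> w Hw; by rewrite Fm_out ?tl_out' // mulr0 !mul0r.
rewrite [RHS]ffunE (eq_bigr _ (fun a _ => E a)).
case: (boolP [forall k, Sb (t k)]) => [/forallP/tl_ex [t' <-] | Hn].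
  rewrite Fm_tl ffunE; apply: eq_bigr => a _; apply: eq_bigr => w' _.
  rewrite sgnAV_tl; congr (_ * _); apply: eq_bigr => k _; by rewrite !ffunE.
rewrite Fm_out // big1 // => a _; rewrite big1 // => w' _.
case/forallPn: Hn => k Hk.
by rewrite (bigD1 k) //= closure // mul0r mulr0.
Qed.

End S.

Unset Implicit Arguments.

Theorem lemma3p17
  (R : idomainType) (HPID : is_PID R) (Hchar : char0 R)
  (I : finType) (lt : rel I) (Hlt : strict_total lt) (kind : I -> bkind)
  (mu : I -> I -> {ffun I -> R}) (one : {ffun I -> R})
  (HA : calibrated_superalg kind mu one)
  (e : {ffun I -> R}) (He_a : in_a kind e) (He_idem : smul mu e e = e)
  (He_basis : forall b : I, smul mu (delta R b) e = delta R b \/ smul mu (delta R b) e = 0)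
  (d : nat) :
  superiso (AeKind mu e kind) kind
    (GammaT lt kind)
    (GammaT (AeLt mu e lt) (AeKind mu e kind))
    (fun y => exists2 X, GammaT lt kind X & y = actT kind kind mu X (tpow d e))
    (actT kind (AeKind mu e kind) (AeAct mu e))
    (actT kind kind mu).
Proof.
case: HA => Hassoc _ _ _ _.
exists (@Fm R I mu e d); split.
- move=> x y _ _; apply/ffunP => t; rewrite !ffunE -big_split.
  apply: eq_bigr => t' _; by rewrite ffunE.
- move=> r x _; apply/ffunP => t; rewrite !ffunE mulr_sumr.
  apply: eq_bigr => t' _; by rewrite ffunE.
- move=> x Hx; exists (Fm x); first exact: Gamma_Fm.
  apply/ffunP => t; by rewrite (act_tpow He_basis He_a) -Fm_restr.
- move=> x y _ _ Exy; apply/ffunP => t'; by rewrite -(Fm_tl x t') -(Fm_tl y t') Exy.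
split.
- move=> y [X [c Hc] ->]; exists [ffun t' => X (tl t')].
    exists (fun b => c (tl b)) => t'.
    rewrite ffunE Hc big_mkcond (big_inj (@tl_inj _ _ mu e d)); last first.
      move=> b'' Hn; rewrite yb_out2 // mulr0; by case: ifP.
    rewrite [RHS]big_mkcond; apply: eq_bigr => b _; by rewrite -is_seq_tl yb_tl.
  apply/ffunP => t; rewrite (act_tpow He_basis He_a).
  case: (boolP [forall k, Sb mu e (t k)]) => [/forallP/tl_ex [t' <-] | Hn].
    rewrite Fm_tl ffunE big1 ?mulr1 // => k _; by rewrite tl_S.
  by rewrite Fm_out // prod_out // mulr0.
- move=> p x _ Hh t; case: (boolP [forall k, Sb mu e (t k)]) => [/forallP/tl_ex [t' <-] | Hn].
    rewrite Fm_tl -tpar_tl; exact: Hh.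
  by rewrite Fm_out // eqxx.
- move=> X x _ _; exact: (Fm_act Hassoc).
Qed.
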